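(* Let $R$ be a ring (associative with identity). Then the ring $B(R)$ of all $\omega\times\omega$ row-finite and column-finite matrices over $R$ is 2-clean.
   Context: A matrix indexed by $\mathbb{N}\times\mathbb{N}$ is row-finite (resp. column-finite) if each row (resp. column) has only finitely many nonzero entries; $B(R)$ is the ring of matrices that are both, under the usual matrix operations. For a positive integer $n$, a ring $S$ is called $n$-clean if every element of $S$ can be written as $e+u_1+\cdots+u_n$ with $e=e^2\in S$ and $u_1,\dots,u_n$ units of $S$. *)

(* Defs.v *)
From mathcomp Require Import all_boot all_algebra.
Set Implicit Arguments. Unset Strict Implicit. Unset Printing Implicit Defensive.
Import GRing.Theory.
Local Open Scope ring_scope.

Definition nmx (R : Type) := nat -> nat -> R.

Section BR.
Variable R : pzRingType.

Definition row_finite (A : nmx R) : Prop :=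
  forall i, exists N, forall j, (N <= j)%N -> A i j = 0.
Definition col_finite (A : nmx R) : Prop :=
  forall j, exists N, forall i, (N <= i)%N -> A i j = 0.
Definition inB (A : nmx R) : Prop := row_finite A /\ col_finite A.

(* C is the matrix product A*B: each entry is the (eventually constant,
   since A is row-finite) finite sum  sum_k A i k * B k j *)
Definition mx_prod (A B C : nmx R) : Prop :=
  forall i j, exists N, forall n, (N <= n)%N ->
    \sum_(k < n) A i k * B k j = C i j.

Definition idB : nmx R := fun i j => if i == j then 1 else 0.

Definition unitB (U : nmx R) : Prop :=
  inB U /\ exists V, inB V /\ mx_prod U V idB /\ mx_prod V U idB.

Definition idemB (E : nmx R) : Prop := inB E /\ mx_prod E E E.

Definition B_two_clean : Prop :=
  forall A, inB A -> exists E U1 U2,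
    idemB E /\ unitB U1 /\ unitB U2 /\
    forall i j, A i j = E i j + U1 i j + U2 i j.
End BR.

(* Main.v *)
Require Import Defs.
From mathcomp Require Import all_boot all_algebra zify.
From Stdlib Require Import ClassicalEpsilon FunctionalExtensionality.
Set Implicit Arguments. Unset Strict Implicit. Unset Printing Implicit Defensive.
Import GRing.Theory.
Local Open Scope ring_scope.

Lemma sum_trunc {R : pzRingType} (f : nat -> R) (N n : nat) :
  (forall k, (N <= k)%N -> f k = 0) -> (N <= n)%N ->
  \sum_(k < n) f k = \sum_(k < N) f k.
Proof.
move=> Hf Hn; rewrite -(subnKC Hn) big_split_ord /= [X in _ + X]big1 ?addr0 //.
by move=> k _; apply: Hf; rewrite leq_addr.
Qed.

Lemma sum_split {R : pzRingType} (f : nat -> R) n :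
  \sum_(k < n.*2) f k = \sum_(k < n) f k.*2 + \sum_(k < n) f k.*2.+1.
Proof.
elim: n => [|n IH]; first by rewrite !big_ord0 addr0.
rewrite doubleS !big_ord_recr /= IH.
by rewrite -!addrA; congr (_ + _); rewrite addrCA.
Qed.

Definition rb {R : pzRingType} (A : nmx R) (i : nat) : nat :=
  epsilon (inhabits 0%N) (fun N => forall j, (N <= j)%N -> A i j = 0).
Definition cb {R : pzRingType} (A : nmx R) (j : nat) : nat :=
  epsilon (inhabits 0%N) (fun N => forall i, (N <= i)%N -> A i j = 0).

Lemma rbP {R : pzRingType} (A : nmx R) : row_finite A ->
  forall i j, (rb A i <= j)%N -> A i j = 0.
Proof. move=> H i; exact: (epsilon_spec (inhabits 0%N) _ (H i)). Qed.
Lemma cbP {R : pzRingType} (A : nmx R) : col_finite A ->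
  forall j i, (cb A j <= i)%N -> A i j = 0.
Proof. move=> H j; exact: (epsilon_spec (inhabits 0%N) _ (H j)). Qed.

Definition mul {R : pzRingType} (A B : nmx R) : nmx R :=
  fun i j => \sum_(k < rb A i) A i k * B k j.
Definition addm {R : pzRingType} (A B : nmx R) : nmx R := fun i j => A i j + B i j.
Definition oppm {R : pzRingType} (A : nmx R) : nmx R := fun i j => - A i j.
Definition zerom {R : pzRingType} : nmx R := fun _ _ => 0.

Lemma mulE {R : pzRingType} (A B : nmx R) i j n : row_finite A ->
  (forall k, (n <= k)%N -> A i k * B k j = 0) ->
  mul A B i j = \sum_(k < n) A i k * B k j.
Proof.
move=> HA Hn; rewrite /mul.
rewrite -(@sum_trunc _ (fun k => A i k * B k j) (rb A i) (maxn n (rb A i))) ?leq_maxr //; last first.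
  by move=> k Hk; rewrite (rbP HA) // mul0r.
by rewrite (@sum_trunc _ (fun k => A i k * B k j) n (maxn n (rb A i))) ?leq_maxl.
Qed.

Lemma mul_prod {R : pzRingType} (A B : nmx R) : row_finite A -> mx_prod A B (mul A B).
Proof.
move=> HA i j; exists (rb A i) => n Hn; rewrite (@mulE _ _ _ _ _ n) //.
by move=> k Hk; rewrite (rbP HA) ?mul0r //; apply: leq_trans Hk.
Qed.

Lemma rf_mul {R : pzRingType} (A B : nmx R) : row_finite A -> row_finite B ->
  forall i j, (\max_(k < rb A i) rb B k <= j)%N -> mul A B i j = 0.
Proof.
move=> HA HB i j Hj; rewrite /mul big1 // => k _.
rewrite (rbP HB) ?mulr0 //; apply: leq_trans Hj.
exact: (@leq_bigmax _ (fun k0 : 'I_(rb A i) => rb B k0) k).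
Qed.

Lemma inB_mul {R : pzRingType} (A B : nmx R) : inB A -> inB B -> inB (mul A B).
Proof.
move=> [HA CA] [HB CB]; split.
  move=> i; exists (\max_(k < rb A i) rb B k) => j; exact: rf_mul.
move=> j; exists (\max_(k < cb B j) cb A k) => i Hi.
rewrite (@mulE _ _ _ _ _ (cb B j)) //; last first.
  by move=> k Hk; rewrite (cbP CB) ?mulr0.
rewrite big1 // => k _; rewrite (cbP CA) ?mul0r //; apply: leq_trans Hi.
exact: (@leq_bigmax _ (fun k0 : 'I_(cb B j) => cb A k0) k).
Qed.

Lemma inB_add {R : pzRingType} (A B : nmx R) : inB A -> inB B -> inB (addm A B).
Proof.
move=> [HA CA] [HB CB]; split.
  move=> i; exists (maxn (rb A i) (rb B i)) => j Hj.
  rewrite /addm (rbP HA) ?(rbP HB) ?addr0 //; apply: leq_trans Hj;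
  [exact: leq_maxr | exact: leq_maxl].
move=> j; exists (maxn (cb A j) (cb B j)) => i Hi.
rewrite /addm (cbP CA) ?(cbP CB) ?addr0 //; apply: leq_trans Hi;
[exact: leq_maxr | exact: leq_maxl].
Qed.

Lemma inB_opp {R : pzRingType} (A : nmx R) : inB A -> inB (oppm A).
Proof.
move=> [HA CA]; split.
  by move=> i; exists (rb A i) => j Hj; rewrite /oppm (rbP HA) ?oppr0.
by move=> j; exists (cb A j) => i Hi; rewrite /oppm (cbP CA) ?oppr0.
Qed.

Lemma inB_id {R : pzRingType} : inB (@idB R).
Proof.
split; [move=> i; exists i.+1 | move=> j; exists j.+1] => k Hk; rewrite /idB;
case: eqP => // E; lia.
Qed.

Lemma inB_zero {R : pzRingType} : inB (@zerom R).
Proof. by split; [move=> i | move=> j]; exists 0%N. Qed.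

Lemma mulmA {R : pzRingType} (A B C : nmx R) : row_finite A -> row_finite B ->
  mul (mul A B) C = mul A (mul B C).
Proof.
move=> HA HB; apply: functional_extensionality => i;
apply: functional_extensionality => j.
have HAB : row_finite (mul A B).
  move=> i'; exists (\max_(k < rb A i') rb B k) => j'; exact: rf_mul.
set n := \max_(k < rb A i) rb B k.
rewrite (@mulE _ _ _ _ _ n) //; last by move=> k Hk; rewrite rf_mul ?mul0r.
rewrite [RHS](@mulE _ A (mul B C) i j (rb A i)) //; last first.
  by move=> k Hk; rewrite (rbP HA) ?mul0r.
have L1 : forall k, mul A B i k = \sum_(l < rb A i) A i l * B l k.
  by move=> k; apply: mulE => // l Hl; rewrite (rbP HA) ?mul0r.
have L2 : forall l : 'I_(rb A i), mul B C l j = \sum_(k < n) B l k * C k j.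
  move=> l; apply: mulE => // k Hk; rewrite (rbP HB) ?mul0r //; apply: leq_trans Hk.
  exact: (@leq_bigmax _ (fun k0 : 'I_(rb A i) => rb B k0) l).
under eq_bigr => k _ do rewrite L1 mulr_suml.
under [in RHS]eq_bigr => l _ do rewrite L2 mulr_sumr.
rewrite exchange_big /=; apply: eq_bigr => l _; apply: eq_bigr => k _.
by rewrite mulrA.
Qed.
Lemma mulmDr {R : pzRingType} (A B C : nmx R) : mul A (addm B C) = addm (mul A B) (mul A C).
Proof.
apply: functional_extensionality => i; apply: functional_extensionality => j.
by rewrite /mul /addm -big_split; apply: eq_bigr => k _; rewrite mulrDr.
Qed.

Lemma mulmNr {R : pzRingType} (A B : nmx R) : mul A (oppm B) = oppm (mul A B).
Proof.
apply: functional_extensionality => i; apply: functional_extensionality => j.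
by rewrite /mul /oppm -sumrN; apply: eq_bigr => k _; rewrite mulrN.
Qed.

Lemma mulm0 {R : pzRingType} (A : nmx R) : mul A zerom = zerom.
Proof.
apply: functional_extensionality => i; apply: functional_extensionality => j.
by rewrite /mul /zerom big1 // => k _; rewrite mulr0.
Qed.

Lemma mul0m {R : pzRingType} (A : nmx R) : mul zerom A = zerom.
Proof.
apply: functional_extensionality => i; apply: functional_extensionality => j.
by rewrite /mul /zerom big1 // => k _; rewrite mul0r.
Qed.

Lemma mulm1 {R : pzRingType} (A : nmx R) : row_finite A -> mul A (idB R) = A.
Proof.
move=> HA; apply: functional_extensionality => i; apply: functional_extensionality => j.
rewrite (@mulE _ _ _ _ _ j.+1) //; last first.
  by move=> k Hk; rewrite /idB; case: eqP => [E|_]; [lia | rewrite mulr0].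
rewrite big_ord_recr /= /idB eqxx mulr1 big1 ?add0r // => k _.
by case: eqP => [E|_]; [have := ltn_ord k; lia | rewrite mulr0].
Qed.

Lemma mul1m {R : pzRingType} (A : nmx R) : mul (idB R) A = A.
Proof.
apply: functional_extensionality => i; apply: functional_extensionality => j.
rewrite (@mulE _ _ _ _ _ i.+1) //; first last.
- by move=> k Hk; rewrite /idB; case: eqP => [E|_]; [lia | rewrite mul0r].
- exact: inB_id.1.
rewrite big_ord_recr /= /idB eqxx mul1r big1 ?add0r // => k _.
by case: eqP => [E|_]; [have := ltn_ord k; lia | rewrite mul0r].
Qed.

Lemma mulmDl {R : pzRingType} (A B C : nmx R) : inB A -> inB B ->
  mul (addm A B) C = addm (mul A C) (mul B C).
Proof.
move=> HA HB; apply: functional_extensionality => i; apply: functional_extensionality => j.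
set n := maxn (rb A i) (rb B i).
have H1 : forall k, (n <= k)%N -> A i k = 0.
  by move=> k Hk; rewrite (rbP HA.1) //; apply: leq_trans Hk; apply: leq_maxl.
have H2 : forall k, (n <= k)%N -> B i k = 0.
  by move=> k Hk; rewrite (rbP HB.1) //; apply: leq_trans Hk; apply: leq_maxr.
have RAB := (inB_add HA HB).1.
rewrite (@mulE _ (addm A B) _ _ _ n RAB); last first.
  by move=> k Hk; rewrite /addm H1 ?H2 ?addr0 ?mul0r.
rewrite [RHS]/addm.
rewrite (@mulE _ A _ _ _ n HA.1); last by move=> k Hk; rewrite H1 ?mul0r.
rewrite (@mulE _ B _ _ _ n HB.1); last by move=> k Hk; rewrite H2 ?mul0r.
by rewrite -big_split; apply: eq_bigr => k _; rewrite /addm mulrDl.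
Qed.

Definition blk {R : pzRingType} (a b c d : nmx R) : nmx R := fun i j =>
  if odd i then (if odd j then d (i./2) (j./2) else c (i./2) (j./2))
  else (if odd j then b (i./2) (j./2) else a (i./2) (j./2)).

Lemma inB_blk {R : pzRingType} (a b c d : nmx R) :
  inB a -> inB b -> inB c -> inB d -> inB (blk a b c d).
Proof.
move=> [Ha Ca] [Hb Cb] [Hc Cc] [Hd Cd]; split.
  move=> i; exists (maxn (maxn (rb a (i./2)) (rb b (i./2))) (maxn (rb c (i./2)) (rb d (i./2)))).*2 => j Hj.
  have Hj' : (maxn (maxn (rb a (i./2)) (rb b (i./2))) (maxn (rb c (i./2)) (rb d (i./2))) <= j./2)%N by lia.
  rewrite /blk; case: (odd i); case: (odd j);
  [apply: (rbP Hd) | apply: (rbP Hc) | apply: (rbP Hb) | apply: (rbP Ha)]; lia.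
move=> j; exists (maxn (maxn (cb a (j./2)) (cb b (j./2))) (maxn (cb c (j./2)) (cb d (j./2)))).*2 => i Hi.
have Hi' : (maxn (maxn (cb a (j./2)) (cb b (j./2))) (maxn (cb c (j./2)) (cb d (j./2))) <= i./2)%N by lia.
rewrite /blk; case: (odd i); case: (odd j);
[apply: (cbP Cd) | apply: (cbP Cc) | apply: (cbP Cb) | apply: (cbP Ca)]; lia.
Qed.

Lemma mul_blk {R : pzRingType} (a b c d a' b' c' d' : nmx R) :
  row_finite a -> row_finite b -> row_finite c -> row_finite d ->
  mul (blk a b c d) (blk a' b' c' d') =
  blk (addm (mul a a') (mul b c')) (addm (mul a b') (mul b d'))
      (addm (mul c a') (mul d c')) (addm (mul c b') (mul d d')).
Proof.
move=> Ha Hb Hc Hd.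
have HB : row_finite (blk a b c d).
  move=> i; exists (maxn (maxn (rb a (i./2)) (rb b (i./2))) (maxn (rb c (i./2)) (rb d (i./2)))).*2 => j Hj.
  have Hj' : (maxn (maxn (rb a (i./2)) (rb b (i./2))) (maxn (rb c (i./2)) (rb d (i./2))) <= j./2)%N by lia.
  rewrite /blk; case: (odd i); case: (odd j);
  [apply: (rbP Hd) | apply: (rbP Hc) | apply: (rbP Hb) | apply: (rbP Ha)]; lia.
apply: functional_extensionality => i; apply: functional_extensionality => j.
set n := maxn (maxn (rb a (i./2)) (rb b (i./2))) (maxn (rb c (i./2)) (rb d (i./2))).
have Ea : forall k, (n <= k)%N -> a (i./2) k = 0 by move=> k Hk; apply: (rbP Ha); lia.
have Eb : forall k, (n <= k)%N -> b (i./2) k = 0 by move=> k Hk; apply: (rbP Hb); lia.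
have Ec : forall k, (n <= k)%N -> c (i./2) k = 0 by move=> k Hk; apply: (rbP Hc); lia.
have Ed : forall k, (n <= k)%N -> d (i./2) k = 0 by move=> k Hk; apply: (rbP Hd); lia.
rewrite (@mulE _ _ _ _ _ n.*2) //; last first.
  move=> k Hk; have Hk' : (n <= k./2)%N by lia.
  by rewrite /blk; case: (odd i); case: (odd k); rewrite ?Ea ?Eb ?Ec ?Ed ?mul0r.
rewrite (sum_split (fun k => blk a b c d i k * blk a' b' c' d' k j)).
have M : forall (x y : nmx R), row_finite x -> (forall k, (n <= k)%N -> x (i./2) k = 0) ->
   mul x y (i./2) (j./2) = \sum_(k < n) x (i./2) k * y k (j./2).
  by move=> x y Hx Ex; apply: mulE => // k Hk; rewrite Ex ?mul0r.
rewrite /blk /addm; case: (odd i); case: (odd j);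
rewrite ?M //.
all: by congr (_ + _); apply: eq_bigr => k _ /=; rewrite odd_double /= ?uphalf_double ?doubleK.
Qed.

Lemma mulmNl {R : pzRingType} (A B : nmx R) : row_finite A -> mul (oppm A) B = oppm (mul A B).
Proof.
move=> HA; apply: functional_extensionality => i; apply: functional_extensionality => j.
have HN : row_finite (oppm A) by move=> i'; exists (rb A i') => j' Hj; rewrite /oppm (rbP HA) ?oppr0.
rewrite (@mulE _ (oppm A) _ _ _ (rb A i) HN); last by move=> k Hk; rewrite /oppm (rbP HA) ?oppr0 ?mul0r.
by rewrite /oppm [in RHS]/mul -sumrN; apply: eq_bigr => k _; rewrite mulNr.
Qed.

Ltac fe := apply: functional_extensionality => ?; apply: functional_extensionality => ?.

Lemma blk_id {R : pzRingType} : blk (idB R) zerom zerom (idB R) = idB R.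
Proof.
apply: functional_extensionality => i; apply: functional_extensionality => j.
rewrite /blk /idB /zerom.
have Hi := odd_double_half i; have Hj := odd_double_half j.
case: (odd i) Hi; case: (odd j) Hj => /= Hj Hi.
all: by repeat case: eqP => ? //; exfalso; lia.
Qed.

Lemma unitB_of {R : pzRingType} (U V : nmx R) : inB U -> inB V ->
  mul U V = idB R -> mul V U = idB R -> unitB U.
Proof.
move=> HU HV E1 E2; split => //; exists V; split => //; split.
  by rewrite -E1; apply: mul_prod; case: HU.
by rewrite -E2; apply: mul_prod; case: HV.
Qed.

Lemma sub_inB {R : pzRingType} (A : nmx R) (p q : bool) : inB A ->
  inB (fun i j => A (p + i.*2)%N (q + j.*2)%N).
Proof.
move=> [HA CA]; split.
  move=> i; exists (rb A (p + i.*2)) => j Hj; apply: (rbP HA); lia.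
move=> j; exists (cb A (q + j.*2)) => i Hi; apply: (cbP CA); lia.
Qed.

Lemma meq {R : pzRingType} (A B : nmx R) : (forall i j, A i j = B i j) -> A = B.
Proof. by move=> H; apply: functional_extensionality => i; apply: functional_extensionality => j. Qed.

Lemma blk_decomp {R : pzRingType} (A : nmx R) :
  A = blk (fun i j => A (false + i.*2)%N (false + j.*2)%N)
          (fun i j => A (false + i.*2)%N (true + j.*2)%N)
          (fun i j => A (true + i.*2)%N (false + j.*2)%N)
          (fun i j => A (true + i.*2)%N (true + j.*2)%N).
Proof.
apply: meq => i j.
rewrite /blk; have Hi := odd_double_half i; have Hj := odd_double_half j.
by case: (odd i) Hi; case: (odd j) Hj => Hj Hi; rewrite -[in LHS]Hi -[in LHS]Hj.
Qed.

Theorem theorem8 (R : pzRingType) : B_two_clean R.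
Proof.
move=> A HA.
set a := (fun i j => A (false + i.*2)%N (false + j.*2)%N).
set b := (fun i j => A (false + i.*2)%N (true + j.*2)%N).
set c := (fun i j => A (true + i.*2)%N (false + j.*2)%N).
set d := (fun i j => A (true + i.*2)%N (true + j.*2)%N).
have Ha : inB a := sub_inB false false HA.
have Hb : inB b := sub_inB false true HA.
have Hc : inB c := sub_inB true false HA.
have Hd : inB d := sub_inB true true HA.
have DA := blk_decomp A; rewrite -/a -/b -/c -/d in DA.
set one := idB R.
have H1 : inB one := inB_id.
have H0 : inB (@zerom R) := inB_zero.
set x := addm a (oppm (addm one one)).
set s := addm d (oppm one).
have Hx : inB x by apply: inB_add => //; apply: inB_opp; apply: inB_add.
have Hs : inB s by apply: inB_add => //; apply: inB_opp.
set q := addm one (mul s x).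
have Hsx : inB (mul s x) by apply: inB_mul.
have Hxs : inB (mul x s) by apply: inB_mul.
have Hq : inB q by apply: inB_add.
set w := addm c (oppm q).
have Hw : inB w by apply: inB_add => //; apply: inB_opp.
have Hb1 : inB (addm b (oppm one)) by apply: inB_add => //; apply: inB_opp.
exists (blk one (addm b (oppm one)) zerom zerom).
exists (blk x one q s).
exists (blk one zerom w one).
split; [|split; [|split]].
- split; first by apply: inB_blk.
  have EE : mul (blk one (addm b (oppm one)) zerom zerom) (blk one (addm b (oppm one)) zerom zerom)
     = blk one (addm b (oppm one)) zerom zerom.
    rewrite (mul_blk _ _ _ _ H1.1 Hb1.1 H0.1 H0.1) !mulm0 !mul0m !mul1m.
    by congr blk; apply: meq => i j; rewrite /addm /zerom ?addr0.
  by move: (mul_prod (blk one (addm b (oppm one)) zerom zerom) (inB_blk H1 Hb1 H0 H0).1); rewrite EE.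
- apply: (@unitB_of _ _ (blk (oppm s) one (addm one (mul x s)) (oppm x))).
  + by apply: inB_blk.
  + by apply: inB_blk => //; try apply: inB_opp => //; apply: inB_add.
  + rewrite (mul_blk _ _ _ _ Hx.1 H1.1 Hq.1 Hs.1) -blk_id; congr blk.
    * rewrite mulmNr mul1m.
      apply: meq => i j.
      by rewrite /addm /oppm addrCA addNr addr0.
    * rewrite (mulm1 Hx.1) mul1m.
      apply: meq => i j.
      by rewrite /addm /oppm /zerom addrN.
    * rewrite mulmNr mulmDr (mulm1 Hs.1) /q (mulmDl _ H1 Hsx) mul1m (mulmA _ Hs.1 Hx.1).
      apply: meq => i j.
      by rewrite /addm /oppm /zerom addNr.
    * rewrite (mulm1 Hq.1) mulmNr.
      apply: meq => i j.
      by rewrite /q /addm /oppm addrK.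
  + rewrite (mul_blk _ _ _ _ (inB_opp Hs).1 H1.1 (inB_add H1 Hxs).1 (inB_opp Hx).1) -blk_id; congr blk.
    * rewrite (mulmNl _ Hs.1) mul1m.
      apply: meq => i j.
      by rewrite /q /addm /oppm addrCA addNr addr0.
    * rewrite (mulm1 (inB_opp Hs).1) mul1m.
      apply: meq => i j.
      by rewrite /addm /oppm /zerom addNr.
    * rewrite (mulmDl _ H1 Hxs) mul1m (mulmA _ Hx.1 Hs.1) (mulmNl _ Hx.1) /q mulmDr (mulm1 Hx.1).
      apply: meq => i j.
      by rewrite /addm /oppm /zerom addrN.
    * rewrite (mulm1 (inB_add H1 Hxs).1) (mulmNl _ Hx.1).
      apply: meq => i j.
      by rewrite /addm /oppm addrK.
- apply: (@unitB_of _ _ (blk one zerom (oppm w) one)).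
  + by apply: inB_blk.
  + by apply: inB_blk => //; apply: inB_opp.
  + rewrite (mul_blk _ _ _ _ H1.1 H0.1 Hw.1 H1.1) -blk_id; congr blk;
      rewrite ?mul1m ?mulm0 ?mul0m ?(mulm1 Hw.1);
      apply: meq => i j;
      by rewrite /addm /oppm /zerom ?addr0 ?add0r ?addrN.
  + rewrite (mul_blk _ _ _ _ H1.1 H0.1 (inB_opp Hw).1 H1.1) -blk_id; congr blk;
      rewrite ?mul1m ?mulm0 ?mul0m ?(mulm1 (inB_opp Hw).1);
      apply: meq => i j;
      by rewrite /addm /oppm /zerom ?addr0 ?add0r ?addNr.
- move=> i j; rewrite [in LHS]DA /blk.
  case: (odd i); case: (odd j); rewrite /x /s /q /w /addm /oppm /zerom /=.
  + by rewrite add0r subrK.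
  + by rewrite /q /addm add0r addrC subrK.
  + by rewrite addr0 subrK.
  + by rewrite [RHS]addrC [RHS]addrA [RHS]addrC subrK.
Qed.
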